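(* Let $\alpha:[0,T]\to[0,1]$ be continuously differentiable and strictly decreasing with $\alpha_0=1$ and $\alpha_T=0$. Fix $x_0\in\mathbb{R}^d$ and, for $t\in(0,T]$, let $p_t=\mathcal{N}(\sqrt{\alpha_t}\,x_0,(1-\alpha_t)I_d)$. This is the time-$t$ marginal of the linear SDE $du=F_t u\,dt+G_t\,dw$ with $F_t=\tfrac12\tfrac{d\log\alpha_t}{dt}I_d$, $G_t=\sqrt{-\tfrac{d\log\alpha_t}{dt}}\,I_d$, started from the Dirac distribution $p_0=\delta_{x_0}$. Let $u:(0,T)\to\mathbb{R}^d$ be any solution of the probability flow ODE with the exact score, $$\frac{du}{dt}=F_t u-\tfrac12 G_tG_t^T\nabla\log p_t(u).$$ Then $\epsilon_{\rm GT}(u(t),t):=-\sqrt{1-\alpha_t}\,\nabla\log p_t(u(t))$ is constant in $t\in(0,T)$. Moreover, if $u(t)$ has a limit $u(T)$ as $t\to T$, this constant equals $-\nabla\log p_T(u(T))=u(T)$.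
   Context: $\nabla$ denotes the gradient with respect to the spatial variable. The quantity $\epsilon_{\rm GT}$ is the ground-truth ''noise prediction'' associated with the score parameterization $s(u,t)=-\epsilon(u,t)/\sqrt{1-\alpha_t}$. *)

(* Defs.v *)
From HB Require Import structures.
From mathcomp Require Import all_boot all_order all_algebra.
From mathcomp Require Import all_classical all_reals all_analysis.
Set Implicit Arguments. Unset Strict Implicit. Unset Printing Implicit Defensive.
Import Order.TTheory GRing.Theory Num.Theory.
Import numFieldNormedType.Exports.
Local Open Scope classical_set_scope.
Local Open Scope ring_scope.

Definition gauss_pdf (R : realType) (d : nat) (m : 'rV[R]_d) (s2 : R)
    (x : 'rV[R]_d) : R :=
  (2 * pi * s2) `^ (- (d%:R / 2)) *
  expR (- (\sum_(i < d) (x ord0 i - m ord0 i) ^+ 2) / (2 * s2)).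

Definition grad (R : realType) (d : nat) (f : 'rV[R]_d -> R) (x : 'rV[R]_d)
    : 'rV[R]_d :=
  \row_(i < d) ('D_(delta_mx ord0 i) f x).

Definition p_t (R : realType) (d : nat) (alpha : R -> R) (x0 : 'rV[R]_d)
    (t : R) : 'rV[R]_d -> R :=
  gauss_pdf (Num.sqrt (alpha t) *: x0) (1 - alpha t).

Definition score (R : realType) (d : nat) (alpha : R -> R) (x0 : 'rV[R]_d)
    (t : R) (y : 'rV[R]_d) : 'rV[R]_d :=
  grad (fun z => ln (p_t alpha x0 t z)) y.

Definition dlog_alpha (R : realType) (alpha : R -> R) (t : R) : R :=
  derive1 (fun s => ln (alpha s)) t.

Definition F_coef (R : realType) (alpha : R -> R) (t : R) : R :=
  dlog_alpha alpha t / 2.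
Definition G_coef (R : realType) (alpha : R -> R) (t : R) : R :=
  Num.sqrt (- dlog_alpha alpha t).

Definition eps_GT (R : realType) (d : nat) (alpha : R -> R) (x0 : 'rV[R]_d)
    (y : 'rV[R]_d) (t : R) : 'rV[R]_d :=
  - (Num.sqrt (1 - alpha t) *: score alpha x0 t y).

(* Main.v *)
Require Import Defs.
From HB Require Import structures.
From mathcomp Require Import all_boot all_order all_algebra.
From mathcomp Require Import all_classical all_reals all_analysis.
From mathcomp Require Import ring lra.
Import Order.TTheory GRing.Theory Num.Theory.
Import numFieldNormedType.Exports.
Local Open Scope classical_set_scope.
Local Open Scope ring_scope.
Section S.
Variable R : realType.
Variable d : nat.

Lemma is_derive_coord (x v : 'rV[R]_d) j :
  is_derive x v (fun z : 'rV[R]_d => z ord0 j) (v ord0 j).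
Proof.
have hd := @derivable_id _ _ x v.
have D := derive_mx hd.
rewrite derive_id in D.
apply: DeriveDef.
  by move/derivable_mxP: hd => /(_ ord0 j).
by have := congr1 (fun M : 'rV[R]_d => M ord0 j) D; rewrite mxE => ->.
Qed.

Lemma is_derive_sq (x v m : 'rV[R]_d) j :
  is_derive x v (fun z : 'rV[R]_d => (z ord0 j - m ord0 j) ^+ 2)
    (2 * (x ord0 j - m ord0 j) * v ord0 j).
Proof.
have h1 : is_derive x v (fun z : 'rV[R]_d => z ord0 j - m ord0 j) (v ord0 j).
  have := is_deriveB (is_derive_coord x v j) (is_derive_cst (m ord0 j) x v).
  by rewrite subr0.
have := is_deriveX 2 h1.
move=> H.
have -> : (fun z : 'rV[R]_d => (z ord0 j - m ord0 j) ^+ 2) =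
  (fun z : 'rV[R]_d => z ord0 j - m ord0 j) ^+ 2.
  by apply/funext => z; rewrite exprfctE.
apply: is_derive_eq H _.
by rewrite /= expr1.
Qed.

Lemma grad_ln_gauss (m y : 'rV[R]_d) (s2 : R) : 0 < s2 ->
  grad (fun z => ln (gauss_pdf m s2 z)) y = - (s2^-1 *: (y - m)).
Proof.
move=> s20.
set C := (2 * pi * s2) `^ (- (d%:R / 2)).
have C0 : 0 < C by apply: powR_gt0; rewrite !mulr_gt0 // pi_gt0.
have -> : (fun z => ln (gauss_pdf m s2 z)) =
   (fun z => ln C + (- (2 * s2)^-1) * \sum_(j < d) (z ord0 j - m ord0 j) ^+ 2).
  apply/funext => z; rewrite /gauss_pdf -/C lnM ?posrE ?expR_gt0 // expRK.
  by rewrite mulNr mulrC mulNr.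
rewrite /grad; apply/rowP => i; rewrite !mxE.
have Hs : is_derive y (delta_mx ord0 i)
   (fun z : 'rV[R]_d => \sum_(j < d) (z ord0 j - m ord0 j) ^+ 2)
   (\sum_(j < d) (2 * (y ord0 j - m ord0 j) * (delta_mx ord0 i : 'rV[R]_d) ord0 j)).
  have -> : (fun z : 'rV[R]_d => \sum_(j < d) (z ord0 j - m ord0 j) ^+ 2) =
    \sum_(j < d) (fun z : 'rV[R]_d => (z ord0 j - m ord0 j) ^+ 2).
    by rewrite fct_sumE.
  exact: (@is_derive_sum _ _ _ d (fun j (z : 'rV[R]_d) => (z ord0 j - m ord0 j) ^+ 2) y
    (delta_mx ord0 i) (fun j => 2 * (y ord0 j - m ord0 j) * (delta_mx ord0 i : 'rV[R]_d) ord0 j)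
    (fun j => is_derive_sq y (delta_mx ord0 i) m j)).
have H := is_deriveD (is_derive_cst (ln C) y (delta_mx ord0 i))
             (is_deriveZ (- (2 * s2)^-1) Hs).
rewrite (derive_val (is_derive:=H)).
rewrite (bigD1 i) //= big1 => [|j ji]; last by rewrite mxE (negbTE ji) andbF mulr0.
rewrite mxE !eqxx /= mulr1 addr0 add0r.
have s2n : s2 != 0 by rewrite gt_eqF.
rewrite -[LHS]/(- (2 * s2)^-1 * (2 * (y ord0 i - m ord0 i))).
by field.
Qed.

Lemma deriv_decr_le0 (f : R -> R) (a b t : R) :
  a < t < b -> derivable f t 1 ->
  (forall s r, a <= s -> s < r -> r <= b -> f r < f s) ->
  'D_1 f t <= 0.
Proof.
move=> /andP[ha hb] hd decr.
have dpos : 0 < Num.min (t - a) (b - t) by rewrite lt_min !subr_gt0 ha hb.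
apply: limr_le => //.
near=> h.
have hN0 : h != 0 by near: h; exact: nbhs_dnbhs_neq.
have hlt : `|h| < Num.min (t - a) (b - t) by near: h; exact: dnbhs0_lt.
rewrite lt_min in hlt; case/andP: hlt => h1 h2.
rewrite /= scaler1 [h + t]addrC.
case: (ltgtP h 0) hN0 => // hs _.
- have : f t < f (t + h).
    apply: decr; last by lra.
    + rewrite ltr0_norm // in h1; lra.
    + lra.
  move=> lt; rewrite -[_ *: _]/(h^-1 * _) mulrC pmulr_rle0 ?subr_gt0 //.
  by rewrite ltW // invr_lt0.
- have : f (t + h) < f t.
    apply: decr; first lra.
    + lra.
    + rewrite gtr0_norm // in h2; lra.
  move=> lt; rewrite -[_ *: _]/(h^-1 * _) mulrC nmulr_rle0 ?subr_lt0 //.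
  by rewrite ltW // invr_gt0.
Unshelve. all: by end_near.
Qed.

Lemma invsqrt (x : R) : 0 < x -> (Num.sqrt x)^-1 = Num.sqrt x / x.
Proof.
move=> x0; have sx : 0 < Num.sqrt x by rewrite sqrtr_gt0.
rewrite -[X in _ / X](sqr_sqrtr (ltW x0)); field; exact: lt0r_neq0.
Qed.

Lemma eps_formula (alpha : R -> R) (x0 y : 'rV[R]_d) t : alpha t < 1 ->
  eps_GT alpha x0 y t =
  (Num.sqrt (1 - alpha t))^-1 *: (y - Num.sqrt (alpha t) *: x0).
Proof.
move=> a1; have b0 : 0 < 1 - alpha t by rewrite subr_gt0.
rewrite /eps_GT /score /p_t grad_ln_gauss // scalerN opprK scalerA.
by rewrite invsqrt.
Qed.

Definition ecomp (alpha : R -> R) (x0 : 'rV[R]_d) (u : R -> 'rV[R]_d) i (s : R) :=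
  (u s ord0 i - Num.sqrt (alpha s) * x0 ord0 i) * (Num.sqrt (1 - alpha s))^-1.

Lemma ecomp_deriv (alpha : R -> R) (x0 : 'rV[R]_d) (u : R -> 'rV[R]_d) i t :
  0 < alpha t -> alpha t < 1 -> derivable alpha t 1 -> 'D_1 alpha t <= 0 ->
  is_derive t 1 u
       (F_coef alpha t *: u t
        - (1 / 2 * (G_coef alpha t * G_coef alpha t)) *: score alpha x0 t (u t)) ->
  is_derive t 1 (ecomp alpha x0 u i) 0.
Proof.
move=> a0 a1 ad a'le0 hU.
have b0 : 0 < 1 - alpha t by rewrite subr_gt0.
have hA : is_derive t 1 alpha ('D_1 alpha t) := derivableP ad.
set a' := 'D_1 alpha t in hA a'le0 *.
set U := (F_coef alpha t *: u t - _) in hU.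
have hUi : is_derive t 1 (fun s => u s ord0 i) (U ord0 i).
  apply: DeriveDef.
    by move/derivable_mxP: (@ex_derive _ _ _ _ _ _ _ hU) => /(_ ord0 i).
  have := derive_mx (@ex_derive _ _ _ _ _ _ _ hU).
  rewrite derive_val => D.
  by rewrite [in RHS]D mxE.
have hD : dlog_alpha alpha t = (alpha t)^-1 * a'.
  rewrite /dlog_alpha derive1E.
  have [_ E] := is_derive1_comp (is_derive1_ln a0) hA.
  exact: E.
have hsa : is_derive t 1 (fun s => Num.sqrt (alpha s)) ((2 * Num.sqrt (alpha t))^-1 * a')
  := is_derive1_comp (is_derive1_sqrt a0) hA.
have h1a : is_derive t 1 (fun s => 1 - alpha s) (0 - a')
  := is_deriveB (is_derive_cst (1 : R) t 1) hA.
have hsb : is_derive t 1 (fun s => Num.sqrt (1 - alpha s))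
     ((2 * Num.sqrt (1 - alpha t))^-1 * (0 - a'))
  := @is_derive1_comp _ Num.sqrt (fun s => 1 - alpha s) t _ _ (is_derive1_sqrt b0) h1a.
have sbn : Num.sqrt (1 - alpha t) != 0 by rewrite gt_eqF // sqrtr_gt0.
have hisb := is_deriveV (f := fun s => Num.sqrt (1 - alpha s)) (x := t) sbn hsb.
have hnum : is_derive t 1 (fun s => u s ord0 i - Num.sqrt (alpha s) * x0 ord0 i) _
  := is_deriveB hUi (is_deriveM hsa (is_derive_cst (x0 ord0 i) t 1)).
have H : is_derive t 1 (ecomp alpha x0 u i) _ := is_deriveM hnum hisb.
apply: is_derive_eq H _.
have hG : G_coef alpha t * G_coef alpha t = - ((alpha t)^-1 * a').
  rewrite /G_coef hD -expr2 sqr_sqrtr //.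
  by rewrite oppr_ge0 mulr_ge0_le0 // invr_ge0 ltW.
rewrite /U /F_coef hG hD sqr_sqrtr ?ltW // /score /p_t grad_ln_gauss // !mxE.
rewrite /cst scaler0 add0r.
rewrite !invfM !(invsqrt _ a0) !(invsqrt _ b0) add0r.
have an : alpha t != 0 by rewrite gt_eqF.
have bn : 1 - alpha t != 0 by rewrite gt_eqF.
rewrite /GRing.scale /=.
field.
by rewrite an bn.
Qed.
End S.
Arguments ecomp {R d}.

Theorem proposition1 (R : realType) (d : nat) (T : R) (alpha : R -> R)
  (x0 : 'rV[R]_d) (u : R -> 'rV[R]_d) :
  0 < T ->
  (forall t, 0 <= t <= T -> 0 <= alpha t <= 1) ->
  (forall t, 0 <= t <= T -> derivable alpha t 1) ->
  {within `[0, T], continuous (derive1 alpha)} ->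
  (forall s t, 0 <= s -> s < t -> t <= T -> alpha t < alpha s) ->
  alpha 0 = 1 -> alpha T = 0 ->
  (forall t, 0 < t < T ->
     is_derive t 1 u
       (F_coef alpha t *: u t
        - (1 / 2 * (G_coef alpha t * G_coef alpha t)) *: score alpha x0 t (u t))) ->
  exists c : 'rV[R]_d,
    (forall t, 0 < t < T -> eps_GT alpha x0 (u t) t = c) /\
    (forall uT : 'rV[R]_d, u t @[t --> T^'-] --> uT ->
       c = - score alpha x0 T uT /\ c = uT).
Proof.
move=> T0 a01 ader acont adecr a0 aT uder.
have apos t : 0 < t < T -> 0 < alpha t.
  case/andP=> t0 tT; rewrite -aT; apply: adecr => //; exact: ltW.
have alt1 t : 0 < t < T -> alpha t < 1.
  by case/andP=> t0 tT; rewrite -a0; apply: adecr => //; exact: ltW.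
have ader' t : 0 < t < T -> derivable alpha t 1.
  by case/andP=> h1 h2; apply: ader; rewrite !ltW.
have de i t : 0 < t < T -> is_derive t 1 (ecomp alpha x0 u i) 0.
  move=> Ht; apply: ecomp_deriv; [exact: apos|exact: alt1|exact: ader'| |exact: uder].
  exact: (@deriv_decr_le0 _ alpha 0 T t Ht (ader' t Ht) adecr).
have econst0 i s t : s <= t -> 0 < s < T -> 0 < t < T ->
    ecomp alpha x0 u i s = ecomp alpha x0 u i t.
  move=> st /andP[s0 sT] /andP[t0 tT].
  have inI x : x \in `[s, t] -> 0 < x < T.
    by rewrite in_itv /= => /andP[h1 h2]; apply/andP; split; lra.
  have hc : {within `[s, t], continuous (ecomp alpha x0 u i)}.
    apply: derivable_within_continuous => x hx.
    exact: (@ex_derive _ _ _ _ _ _ _ (de i x (inI x hx))).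
  have [c _ E] := @MVT_segment _ (ecomp alpha x0 u i) (fun _ => 0) s t st
    (fun x hx => de i x (inI x (subset_itv_oo_cc hx))) hc.
  by move: E; rewrite mul0r => /eqP; rewrite subr_eq0 => /eqP.
have econst i s t : 0 < s < T -> 0 < t < T ->
    ecomp alpha x0 u i s = ecomp alpha x0 u i t.
  move=> hs ht; case: (leP s t) => st; first exact: econst0.
  by symmetry; apply: econst0 => //; exact: ltW.
have eps_e t : 0 < t < T -> eps_GT alpha x0 (u t) t = \row_i ecomp alpha x0 u i t.
  move=> Ht; rewrite eps_formula ?alt1 //; apply/rowP => i.
  by rewrite !mxE /ecomp mulrC.
have hT2 : 0 < T / 2 < T by apply/andP; split; lra.
exists (\row_i ecomp alpha x0 u i (T / 2)); split.
  move=> t Ht; rewrite eps_e //; apply/rowP => i; rewrite !mxE.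
  exact: econst.
move=> uT hu.
set c := \row_i _.
have near_c : \forall t \near T^'-, eps_GT alpha x0 (u t) t = c.
  near=> t.
  have Ht : 0 < t < T.
    apply/andP; split; last by near: t; exact: nbhs_left_lt.
    by near: t; exact: nbhs_left_gt.
  rewrite eps_e //; apply/rowP => i; rewrite !mxE; exact: econst.
have acT : alpha t @[t --> T^'-] --> 0.
  rewrite -aT; apply: cvg_at_left_filter.
  apply: differentiable_continuous; apply/derivable1_diffP; apply: ader.
  by rewrite lexx ltW.
have hlim' : (fun t => (Num.sqrt (1 - alpha t))^-1 *: (u t - Num.sqrt (alpha t) *: x0))
    @ T^'- --> (Num.sqrt (1 - 0))^-1 *: (uT - Num.sqrt 0 *: x0).
  have hs : Num.sqrt (alpha t) @[t --> T^'-] --> Num.sqrt 0.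
    by apply: continuous_cvg => //; exact: sqrt_continuous.
  have hb : (1 - alpha t) @[t --> T^'-] --> (1 - 0 : R).
    by apply: cvgB => //; exact: cvg_cst.
  have hsb : Num.sqrt (1 - alpha t) @[t --> T^'-] --> Num.sqrt (1 - 0).
    by apply: continuous_cvg => //; exact: sqrt_continuous.
  apply: cvgZ.
    by apply: cvgV => //; rewrite subr0 sqrtr1 oner_neq0.
  apply: cvgB => //.
  by apply: cvgZ => //; exact: cvg_cst.
have hlim : eps_GT alpha x0 (u t) t @[t --> T^'-] -->
    (Num.sqrt (1 - 0))^-1 *: (uT - Num.sqrt 0 *: x0).
  apply: cvg_trans hlim'; apply: near_eq_cvg.
  near=> t.
  have Ht : 0 < t < T.
    apply/andP; split; last by near: t; exact: nbhs_left_lt.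
    by near: t; exact: nbhs_left_gt.
  by rewrite eps_formula ?alt1.
have hlimc : eps_GT alpha x0 (u t) t @[t --> T^'-] --> c.
  exact: cvg_near_cst near_c.
have cuT : c = uT.
    have := cvg_unique _ hlimc hlim.
  rewrite subr0 sqrtr1 invr1 scale1r sqrtr0 scale0r subr0 => ->; exact.
split => //.
rewrite cuT /score /p_t aT grad_ln_gauss ?subr0 ?ltr01 //.
by rewrite sqrtr0 scale0r subr0 invr1 scale1r opprK.
Unshelve. all: by end_near.
Qed.
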